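(* Let $V_6=(\mathbb{P}^1)^3$ with coordinates $[u_i:v_i]$, let $\tau$ be the involution $([u_1:v_1],[u_2:v_2],[u_3:v_3])\mapsto([u_1:-v_1],[u_2:-v_2],[u_3:-v_3])$, and let $X_{24}=V_6/\tau$, a toric variety for the torus $\mathbb{T}_3=(\mathbb{C}^* )^3/\{\pm(1,1,1)\}$ with the action induced from the diagonal action $[u_i:v_i]\mapsto[t_iu_i:v_i]$ of $(\mathbb{C}^* )^3$ on $V_6$. Let $G_{X_{24}}$ be the group of automorphisms of $X_{24}$ induced by the group generated by $(\mathbb{C}^* )^3$, the permutations of the three factors of $V_6$, and the involutions $\upsilon\times\upsilon\times\mathrm{id}$, $\upsilon\times\mathrm{id}\times\upsilon$, $\upsilon\times\upsilon\times\upsilon$, where $\upsilon([u:v])=[v:u]$ (all of which commute with $\tau$ or normalize $\langle\tau\rangle$). Let $\mathbb{W}_3^{\mathfrak{A}}\cong\mathfrak{A}_4$ be the image in $G_{X_{24}}$ of the group generated by the cyclic permutations of the factors and $\upsilon\times\upsilon\times\mathrm{id}$, $\upsilon\times\mathrm{id}\times\upsilon$. If $G$ is a subgroup of $G_{X_{24}}$ containing $\mathbb{W}_3^{\mathfrak{A}}$, then $\mathrm{rk}\,\mathrm{Cl}(X_{24})^G=1$.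
   Context: $G_{X_{24}}$ is the normalizer of the maximal torus $\mathbb{T}_3$ in $\mathrm{Aut}(X_{24})$; $X_{24}$ is a terminal toric Fano threefold with eight singular points of type $\frac12(1,1,1)$. $\mathrm{Cl}(X_{24})^G$ is the $G$-invariant part of the divisor class group. *)

(* Defs.v *)
From mathcomp Require Import all_boot all_order all_algebra all_fingroup.
From mathcomp Require Import complex.
From mathcomp Require Import Rstruct.
Set Implicit Arguments. Unset Strict Implicit. Unset Printing Implicit Defensive.
Import Order.TTheory GRing.Theory Num.Theory.
Local Open Scope ring_scope.

Definition CC : Type := complex Rdefinitions.R.

(* V_6 = (P^1)^3.  A factor map of P^1 with parameters (t, b):
     b = false :  [u:v] |-> [t u : v]
     b = true  :  [u:v] |-> [t v : u]      (= diag(t,1) o upsilon)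
   An element (s, t, b) of the group hat G generated by (C^* )^3, the
   permutations of the factors and the upsilon's maps the i-th factor to the
   (s i)-th factor via the factor map with parameters (t i, b i), i.e.
     g(x)_{s i} = f_{t i, b i}(x_i).                                       *)
Record GXhat := MkGX { gperm : {perm 'I_3}; gtor : 'I_3 -> CC; gflip : 'I_3 -> bool }.

(* f_{t,b} o f_{s,c} = f_{t * s^(b ? -1 : 1), b xor c} *)
Definition gmul (g h : GXhat) : GXhat :=
  MkGX (gperm h * gperm g)%g
       (fun i => gtor g (gperm h i) * (if gflip g (gperm h i) then (gtor h i)^-1 else gtor h i))
       (fun i => gflip g (gperm h i) (+) gflip h i).

(* f_{t,false}^-1 = f_{t^-1,false},  f_{t,true}^-1 = f_{t,true} *)
Definition ginv (g : GXhat) : GXhat :=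
  MkGX (gperm g)^-1%g
       (fun k => let j := ((gperm g)^-1)%g k in
                 if gflip g j then gtor g j else (gtor g j)^-1)
       (fun k => gflip g (((gperm g)^-1)%g k)).

Definition gone : GXhat := MkGX 1%g (fun _ => 1) (fun _ => false).

(* tau = (-1,-1,-1) in the torus: generates the kernel of hat G -> G_{X_24}. *)
Definition gtau : GXhat := MkGX 1%g (fun _ => -1) (fun _ => false).

Definition cyc3 : {perm 'I_3} := perm (@ordS_inj 3).   (* i |-> i+1 mod 3 *)
Definition gcyc : GXhat := MkGX cyc3 (fun _ => 1) (fun _ => false).
Definition ups_pair (k : 'I_3) : GXhat := MkGX 1%g (fun _ => 1) (fun i => i != k).
(* ups_pair 2 = upsilon x upsilon x id,  ups_pair 1 = upsilon x id x upsilon *)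

(* A subgroup of G_{X_24} = hat G / <tau> is encoded by its preimage S in hat G:
   a predicate of genuine group elements (nonzero torus parameters) that
   contains 1 and tau and is closed under product and inverse. *)
Definition preimage_subgroup (S : GXhat -> Prop) : Prop :=
  [/\ forall g, S g -> forall i, gtor g i != 0,
      S gone, S gtau,
      forall g h, S g -> S h -> S (gmul g h)
    & forall g, S g -> S (ginv g)].

Definition contains_WA (S : GXhat -> Prop) : Prop :=
  [/\ S gcyc, S (ups_pair (inord 2)) & S (ups_pair (inord 1))].

(* Divisors.  The T-invariant prime divisors of X_24 are the images of
   {u_i = 0} (index (i,false)) and {v_i = 0} (index (i,true)).
   Weil divisors supported on them: functions 'I_3 -> bool -> int.        *)
Definition divisor := 'I_3 -> bool -> int.

(* Principal T-invariant divisors: div(chi^m) for characters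
   chi^m = prod_i (u_i/v_i)^(m_i) of the torus T_3 = (C^* )^3/{+-1},
   i.e. m in Z^3 with sum m_i even (the tau-invariant characters). *)
Definition principal (D : divisor) : Prop :=
  exists m : 'I_3 -> int, (2 %| \sum_(i < 3) m i)%Z /\
    forall i c, D i c = (if c then - m i else m i).

Definition lin_equiv (D D' : divisor) : Prop := principal (fun i c => D i c - D' i c).

(* push-forward g_* : g maps {u_i=0} to {u_(s i) = 0} if b i = false and to
   {v_(s i) = 0} if b i = true (and symmetrically for {v_i = 0}). *)
Definition push (g : GXhat) (D : divisor) : divisor :=
  fun j d => let i := ((gperm g)^-1)%g j in D i (d (+) gflip g i).

Definition invariant_class (S : GXhat -> Prop) (D : divisor) : Prop :=
  forall g, S g -> lin_equiv (push g D) D.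

Definition cl_independent (k : nat) (F : 'I_k -> divisor) : Prop :=
  forall n : 'I_k -> int,
    principal (fun i c => \sum_(j < k) n j * F j i c) -> forall j, n j = 0.

Definition rank_Cl_inv (S : GXhat -> Prop) (r : nat) : Prop :=
  (exists F : 'I_r -> divisor, (forall j, invariant_class S (F j)) /\ cl_independent F) /\
  (forall F : 'I_r.+1 -> divisor, (forall j, invariant_class S (F j)) -> ~ cl_independent F).

(* Main.v *)
Require Import Defs.
From mathcomp Require Import all_boot all_order all_algebra all_fingroup.
From mathcomp Require Import zify.
Import GRing.Theory.
Local Open Scope ring_scope.

Definition aF (F : divisor) (i : 'I_3) : int := F i false + F i true.

Lemma cyc_step (F : divisor) : lin_equiv (push gcyc F) F -> forall i, aF F i = aF F (cyc3 i).
Proof.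
move=> [m [_ H]] i.
have h1 := H (cyc3 i) false; have h2 := H (cyc3 i) true.
move: h1 h2; rewrite /push /= permK /aF => h1 h2.
lia.
Qed.

Lemma cyc_vals : cyc3 (inord 0) = inord 1 /\ cyc3 (inord 1) = inord 2.
Proof. split; apply/val_inj; rewrite permE /= !inordK //. Qed.

Lemma const_a (F : divisor) : lin_equiv (push gcyc F) F -> forall i, aF F i = aF F (inord 0).
Proof.
move=> H i; have E := @cyc_step F H; case: cyc_vals => c0 c1.
have e1 : aF F (inord 1) = aF F (inord 0) by rewrite [RHS]E c0.
have e2 : aF F (inord 2) = aF F (inord 0) by rewrite -e1 [RHS]E c1.
case: i => [[|[|[|k]]] Hk] //.
- by congr (aF F _); apply/val_inj; rewrite /= inordK.
- by rewrite -e1; congr (aF F _); apply/val_inj; rewrite /= inordK.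
- by rewrite -e2; congr (aF F _); apply/val_inj; rewrite /= inordK.
Qed.

Lemma sum2 (f : 'I_2 -> int) : \sum_(j < 2) f j = f ord0 + f ord_max.
Proof. rewrite big_ord_recr big_ord1 /=; congr (f _ + _); exact: val_inj. Qed.

Theorem corollary4p9 (S : GXhat -> Prop) :
  preimage_subgroup S -> contains_WA S -> rank_Cl_inv S 1.
Proof.
move=> _ [Hc _ _]; split.
  exists (fun _ _ _ => 1); split.
    move=> j g _; exists (fun _ => 0); split; first by rewrite big1.
    by move=> i [] /=; rewrite subrr.
  move=> n [m [_ H]] j.
  have h1 := H ord0 false; have h2 := H ord0 true.
  have -> : j = ord0 by apply/val_inj; case: j => [[]]. move: h1 h2; rewrite /= big_ord1 mulr1 => h1 h2.
  lia.
move=> F HF Hind.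
set k0 := aF (F ord0) (inord 0); set k1 := aF (F ord_max) (inord 0).
have a0 i : F ord0 i false + F ord0 i true = k0 by exact: (@const_a (F ord0) (HF ord0 gcyc Hc) i).
have a1 i : F ord_max i false + F ord_max i true = k1 by exact: (@const_a (F ord_max) (HF ord_max gcyc Hc) i).
pose n' : 'I_2 -> int := fun j => if (k0 == 0) && (k1 == 0) then (j == ord0)%:R
                         else (if j == ord0 then k1 else - k0).
have nz : exists j, n' j != 0.
  case: (boolP ((k0 == 0) && (k1 == 0))) => [h|h].
    by exists ord0; rewrite /n' h.
  rewrite /n' (negbTE h); move/nandP: h => [h|h].
    by exists ord_max; rewrite /= oppr_eq0.
  by exists ord0.
have P i : n' ord0 * F ord0 i true + n' ord_max * F ord_max i true =
           - (n' ord0 * F ord0 i false + n' ord_max * F ord_max i false).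
  have := a0 i; have := a1 i; rewrite /n' /=.
  case: ifP => [/andP [/eqP -> /eqP ->]|_] /= b1 b0; first by lia.
  lia.
have := Hind (fun j => 2 * n' j).
have : principal (fun i c => \sum_(j < 2) (2 * n' j) * F j i c).
  exists (fun i => 2 * (n' ord0 * F ord0 i false + n' ord_max * F ord_max i false)).
  split.
    by rewrite -big_distrr /= dvdz_mulr.
  move=> i c; rewrite sum2; case: c; last by lia.
  have := P i; lia.
move=> Hp /(_ Hp) H0; case: nz => j nj.
by move: (H0 j) => /eqP; rewrite mulf_eq0 (negbTE nj) orbF.
Qed.
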